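(* Let $\mathbb{k}$ be any field and $\mathfrak{h}$ a right Leibniz algebra over $\mathbb{k}$ of finite dimension $n$ with ordered basis $\mathbf{b}=(y_1,\ldots,y_n)$ and structure constants $C^i_{jk}$ given by $[y_j,y_k]=\sum_iC^i_{jk}y_i$. Let $\mathcal{G}^i_j,\bar{\mathcal{G}}^i_j$ be the generators of $\mathcal{O}(\mathrm{Aut}(\mathfrak{h}))$ relative to $\mathbf{b}$, and let $\tilde y$ denote the image of $y\in\mathfrak{h}$ in $\mathfrak{h}_{Lie}$. Then there exists a unique Hopf pairing $\langle-,-\rangle\colon U(\mathfrak{h}_{Lie})\otimes\mathcal{O}(\mathrm{Aut}(\mathfrak{h}))\to\mathbb{k}$ such that $\langle\tilde y_k,\mathcal{G}^i_j\rangle=-C^i_{jk}$ for all $i,j,k\in\{1,\ldots,n\}$. This Hopf pairing does not depend on the choice of basis $\mathbf{b}$.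
   Context: A right Leibniz algebra is a vector space $\mathfrak{h}$ with a bilinear bracket satisfying $[[x,y],z]=[[x,z],y]+[x,[y,z]]$. $\mathfrak{h}_{Lie}$ is the quotient of $\mathfrak{h}$ by the two-sided ideal generated by all $[x,x]$; $U(\mathfrak{h}_{Lie})$ is its universal enveloping algebra with its standard Hopf algebra structure. $\mathcal{O}(\mathrm{Aut}(\mathfrak{h}))$ is the coordinate Hopf algebra of the affine algebraic group of automorphisms of $\mathfrak{h}$; relative to $\mathbf{b}$ it is the commutative algebra generated by $\mathcal{G}^i_j,\bar{\mathcal{G}}^i_j$ ($\mathcal{G}^i_j$ gives the $(i,j)$ matrix entry of an automorphism $\psi$ in basis $\mathbf{b}$, $\psi(y_j)=\sum_i\mathcal{G}^i_j(\psi)y_i$; $\bar{\mathcal{G}}^i_j$ that of $\psi^{-1}$) with relations $\sum_{l,m}C^k_{lm}\mathcal{G}^l_i\mathcal{G}^m_j=\sum_r\mathcal{G}^k_rC^r_{ij}$, $\sum_k\mathcal{G}^i_k\bar{\mathcal{G}}^k_j=\delta^i_j=\sum_k\bar{\mathcal{G}}^i_k\mathcal{G}^k_j$, and Hopf structure $\Delta(\mathcal{G}^i_j)=\sum_k\mathcal{G}^i_k\otimes\mathcal{G}^k_j$, $\Delta(\bar{\mathcal{G}}^i_j)=\sum_k\bar{\mathcal{G}}^k_j\otimes\bar{\mathcal{G}}^i_k$, $\epsilon(\mathcal{G}^i_j)=\epsilon(\bar{\mathcal{G}}^i_j)=\delta^i_j$, $S(\mathcal{G}^i_j)=\bar{\mathcal{G}}^i_j$,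 $S(\bar{\mathcal{G}}^i_j)=\mathcal{G}^i_j$. A Hopf pairing $B\otimes H\to\mathbb{k}$ of bialgebras is a bilinear form (not required nondegenerate) with $\langle\Delta_B(b),h\otimes k\rangle=\langle b,hk\rangle$, $\langle b,1\rangle=\epsilon_B(b)$, $\langle b\otimes c,\Delta_H(h)\rangle=\langle bc,h\rangle$, $\langle 1,h\rangle=\epsilon_H(h)$, with componentwise pairing of tensor products. *)

(* Defs.v *)
From HB Require Import structures.
From mathcomp Require Import all_boot all_order all_algebra.
From mathcomp Require Import mpoly.

Set Implicit Arguments.
Unset Strict Implicit.
Unset Printing Implicit Defensive.

Import GRing.Theory.
Local Open Scope ring_scope.

(* U(h_Lie) is presented as a quotient of the tensor algebra T(h), whose      *)
(* linear basis is the set of words (seq 'I_n) in the basis letters y_i.       *)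
(* O(Aut h) is presented (as in the paper) as the quotient of the polynomial  *)
(* ring P = K[G^i_j, Gbar^i_j] by the ideal of the listed relations.          *)
(* A bilinear form on U(h_Lie) x O(Aut h) is the same thing as a function     *)
(* pr : words -> P -> K, linear in the second argument (and extended          *)
(* linearly in the first), vanishing on (kernel of T(h) -> U(h_Lie)) x P and  *)
(* on T(h) x (relation ideal).  The Hopf pairing axioms are then stated on    *)
(* these representatives; P (x) P is realized as the polynomial ring in twice *)
(* as many variables.                                                         *)

Section Defs.
Variables (K : fieldType) (V : vectType K) (br : V -> V -> V) (n : nat).

Definition bilinear_bracket : Prop :=
  (forall (a : K) (x y z : V), br (a *: x + y) z = a *: br x z + br y z) /\
  (forall (a : K) (x y z : V), br z (a *: x + y) = a *: br z x + br z y).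

Definition right_leibniz : Prop :=
  forall x y z : V, br (br x y) z = br (br x z) y + br x (br y z).

Definition in_leib_ideal (z : V) : Prop :=
  forall S : {vspace V},
    (forall x, br x x \in S) ->
    (forall x s, s \in S -> br x s \in S) ->
    (forall x s, s \in S -> br s x \in S) ->
    z \in S.

(* structure constants: [y_j, y_k] = sum_i C^i_{jk} y_i ;  Cst b i j k = C^i_{jk} *)
Definition Cst (b : n.-tuple V) (i j k : 'I_n) : K :=
  coord b i (br (tnth b j) (tnth b k)).

(* variables of the polynomial ring: (false,(i,j)) ~ G^i_j, (true,(i,j)) ~ Gbar^i_j *)
Definition Idx := (bool * ('I_n * 'I_n))%type.
Definition Nv : nat := #|{: Idx}|.
Definition Pol := {mpoly K[Nv]}.
Definition Pol2 := {mpoly K[Nv + Nv]}.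

Definition Gv (i j : 'I_n) : Pol := 'X_(enum_rank ((false, (i, j)) : Idx)).
Definition Gbv (i j : 'I_n) : Pol := 'X_(enum_rank ((true, (i, j)) : Idx)).

Definition rel_hom (b : n.-tuple V) (i j k : 'I_n) : Pol :=
  \sum_(l < n) \sum_(m < n) Cst b k l m *: (Gv l i * Gv m j)
  - \sum_(r < n) Cst b r i j *: Gv k r.
Definition rel_inv1 (i j : 'I_n) : Pol :=
  \sum_(k < n) Gv i k * Gbv k j - (i == j)%:R.
Definition rel_inv2 (i j : 'I_n) : Pol :=
  \sum_(k < n) Gbv i k * Gv k j - (i == j)%:R.

Definition epsO (f : Pol) : K :=
  meval (fun v : 'I_Nv => let x := enum_val v in (x.2.1 == x.2.2)%:R) f.

Definition XL (v : 'I_Nv) : Pol2 := 'X_(lshift Nv v).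
Definition XR (v : 'I_Nv) : Pol2 := 'X_(rshift Nv v).
Definition Delta_var (x : Idx) : Pol2 :=
  match x with
  | (false, (i, j)) =>
      \sum_(k < n) XL (enum_rank ((false, (i, k)) : Idx)) * XR (enum_rank ((false, (k, j)) : Idx))
  | (true, (i, j)) =>
      \sum_(k < n) XL (enum_rank ((true, (k, j)) : Idx)) * XR (enum_rank ((true, (i, k)) : Idx))
  end.
Definition DeltaO (f : Pol) : Pol2 :=
  comp_mpoly [tuple Delta_var (enum_val v) | v < Nv] f.

Definition mnmL (m : 'X_{1..Nv + Nv}) : 'X_{1..Nv} := [multinom m (lshift Nv i) | i < Nv].
Definition mnmR (m : 'X_{1..Nv + Nv}) : 'X_{1..Nv} := [multinom m (rshift Nv i) | i < Nv].

(* bilinear extension  <u (x) v, F> = sum <u,F1><v,F2> *)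
Definition pair2 (pr : seq 'I_n -> Pol -> K) (u v : seq 'I_n) (F : Pol2) : K :=
  \sum_(m <- msupp F) F@_m * pr u 'X_[mnmL m] * pr v 'X_[mnmR m].

Definition is_hopf_pairing (b : n.-tuple V) (pr : seq 'I_n -> Pol -> K) : Prop :=
  (forall w (a : K) (f g : Pol), pr w (a *: f + g) = a * pr w f + pr w g) /\
  (* well defined on U(h_Lie): vanishing on  y_a y_c - y_c y_a - [y_a, y_c] *)
  (forall (u v : seq 'I_n) (a c : 'I_n) (f : Pol),
     pr (u ++ a :: c :: v) f - pr (u ++ c :: a :: v) f
     - \sum_(d < n) Cst b d a c * pr (u ++ d :: v) f = 0) /\
  (* ... and on the image of the Leibniz kernel of h -> h_Lie *)
  (forall (u v : seq 'I_n) (z : V) (f : Pol), in_leib_ideal z ->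
     \sum_(d < n) coord b d z * pr (u ++ d :: v) f = 0) /\
  (* well defined on O(Aut h): vanishing on the relation ideal *)
  (forall w (g : Pol) (i j k : 'I_n),
     pr w (g * rel_hom b i j k) = 0 /\ pr w (g * rel_inv1 i j) = 0 /\
     pr w (g * rel_inv2 i j) = 0) /\
  (* <Delta_U(w), f (x) g> = <w, f g>, Delta_U(y) = y (x) 1 + 1 (x) y *)
  (forall (w : seq 'I_n) (f g : Pol),
     \sum_(m : (size w).-tuple bool) pr (mask m w) f * pr (mask (map negb m) w) g
     = pr w (f * g)) /\
  (* <w, 1> = eps_U(w) *)
  (forall w, pr w 1 = (w == [::])%:R) /\
  (forall (u v : seq 'I_n) (f : Pol), pr (u ++ v) f = pair2 pr u v (DeltaO f)) /\
  (forall f, pr [::] f = epsO f) /\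
  (forall i j k : 'I_n, pr [:: k] (Gv i j) = - Cst b i j k).

(* change of basis from b' to b:  y'_j = sum_c A_{cj} y_c, A_{cj} = coord b c y'_j,
   y_a = sum_i Ainv_{ia} y'_i, Ainv_{ia} = coord b' i y_a *)
Definition phiO_var (b b' : n.-tuple V) (x : Idx) : Pol :=
  let: (bar, (i, j)) := x in
  \sum_(a < n) \sum_(c < n)
     (coord b' i (tnth b a) * coord b c (tnth b' j)) *: (if bar then Gbv a c else Gv a c).
(* the identification O(Aut h)_{b'} -> O(Aut h)_b *)
Definition phiO (b b' : n.-tuple V) (f : Pol) : Pol :=
  comp_mpoly [tuple phiO_var b b' (enum_val v) | v < Nv] f.

(* the pairing relative to b, transported to the generators relative to b'
   (words in y' are expanded as linear combinations of words in y) *)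
Definition transport (b b' : n.-tuple V) (pr : seq 'I_n -> Pol -> K)
    (w : seq 'I_n) (f : Pol) : K :=
  \sum_(s : (size w).-tuple 'I_n)
    (\prod_(t < size w) coord b (tnth s t) (tnth b' (tnth (in_tuple w) t)))
    * pr s (phiO b b' f).

End Defs.

(* Main.v *)
Require Import Defs.
From HB Require Import structures.
From mathcomp Require Import all_boot all_order all_algebra.
From mathcomp Require Import mpoly.
From mathcomp Require ssrcomplements.
From mathcomp Require Import ring.
Set Implicit Arguments.
Unset Strict Implicit.
Unset Printing Implicit Defensive.
Import GRing.Theory.
Local Open Scope ring_scope.

Section Gen.
Variable K : fieldType.

Lemma mpoly_gen_ind k (Q : {mpoly K[k]} -> Prop) :
  Q 1 -> (forall i, Q 'X_i) -> (forall c p, Q p -> Q (c *: p)) ->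
  (forall p q, Q p -> Q q -> Q (p + q)) -> (forall p q, Q p -> Q q -> Q (p * q)) ->
  forall p, Q p.
Proof.
move=> Q1 QX QZ QD QM.
have Q0 : Q 0 by rewrite -(scale0r 1); apply: QZ.
have QXm : forall m, Q 'X_[m].
  move=> m; rewrite mpolyXE_id; apply: big_ind => // i _.
  by elim: (m i) => [|e IH]; [rewrite expr0 | rewrite exprS; apply: QM].
by elim/mpolyind => // c m p _ _ Qp; apply: QD => //; apply: QZ.
Qed.

Definition isDer k (A : pzRingType) (phi : {mpoly K[k]} -> A) (L : {mpoly K[k]} -> A) :=
  [/\ forall p q, L (p + q) = L p + L q, forall c p, L (c *: p) = phi c%:MP * L p
    & forall p q, L (p * q) = L p * phi q + phi p * L q].

Section DerTheory.
Variables (k : nat) (A : pzRingType) (phi : {mpoly K[k]} -> A) (L : {mpoly K[k]} -> A).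
Hypothesis phi1 : phi 1 = 1.
Hypothesis dL : isDer phi L.

Lemma der1 : L 1 = 0.
Proof.
case: dL => _ _ HM.
have := HM 1 1; rewrite mulr1 phi1 mulr1 mul1r -{1}[L 1]addr0.
by move/addrI <-.
Qed.

Lemma der0 : L 0 = 0.
Proof. by case: dL => HD _ _; have := HD 0 0; rewrite addr0 -{1}[L 0]addr0 => /addrI <-. Qed.

Lemma derC c : L c%:MP = 0.
Proof.
have -> : c%:MP = c *: (1 : {mpoly K[k]}) by rewrite -mul_mpolyC mulr1.
by case: dL => _ HZ _; rewrite HZ der1 mulr0.
Qed.

Lemma derN p : L (- p) = - L p.
Proof.
case: dL => HD _ _; apply/eqP; rewrite -subr_eq0 opprK -HD addNr der0 //.
Qed.

Lemma derB p q : L (p - q) = L p - L q.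
Proof. by case: dL => HD _ _; rewrite HD derN. Qed.

Lemma der_sum I (r : seq I) (P : pred I) F :
  L (\sum_(i <- r | P i) F i) = \sum_(i <- r | P i) L (F i).
Proof.
case: dL => HD _ _; elim: r => [|x r IH]; first by rewrite !big_nil der0.
by rewrite !big_cons; case: (P x); rewrite ?HD IH.
Qed.

Lemma derZ c p : L (c *: p) = phi c%:MP * L p.
Proof. by case: dL. Qed.

Lemma derM p q : L (p * q) = L p * phi q + phi p * L q.
Proof. by case: dL. Qed.

Lemma derD p q : L (p + q) = L p + L q.
Proof. by case: dL. Qed.
End DerTheory.

Lemma der_uniq k (A : pzRingType) (phi : {mpoly K[k]} -> A) (L1 L2 : {mpoly K[k]} -> A) :
  phi 1 = 1 -> isDer phi L1 -> isDer phi L2 -> (forall i, L1 'X_i = L2 'X_i) ->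
  forall p, L1 p = L2 p.
Proof.
move=> p1 d1 d2 HX; apply: mpoly_gen_ind => //.
- by rewrite (der1 p1 d1) (der1 p1 d2).
- by move=> c p Hp; rewrite (derZ d1) (derZ d2) Hp.
- by move=> p q Hp Hq; rewrite (derD d1) (derD d2) Hp Hq.
- by move=> p q Hp Hq; rewrite (derM d1) (derM d2) Hp Hq.
Qed.

Definition lin k (l : {mpoly K[k]} -> K) := forall (a : K) f g, l (a *: f + g) = a * l f + l g.

Section LinTheory.
Variables (k : nat) (l : {mpoly K[k]} -> K).
Hypothesis hl : lin l.
Lemma lin0 : l 0 = 0.
Proof. by have := hl 1 0 0; rewrite scale1r addr0 mul1r -{1}[l 0]addr0 => /addrI <-. Qed.
Lemma linD f g : l (f + g) = l f + l g.
Proof. by rewrite -[f]scale1r hl mul1r scale1r. Qed.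
Lemma linZ a f : l (a *: f) = a * l f.
Proof. by rewrite -[_ *: _]addr0 hl lin0 addr0. Qed.
Lemma lin_sum I (r : seq I) (P : pred I) F :
  l (\sum_(i <- r | P i) F i) = \sum_(i <- r | P i) l (F i).
Proof.
elim: r => [|x r IH]; first by rewrite !big_nil lin0.
by rewrite !big_cons; case: (P x); rewrite ?linD IH.
Qed.
Lemma linN f : l (- f) = - l f.
Proof. by rewrite -scaleN1r linZ mulN1r. Qed.
Lemma linB f g : l (f - g) = l f - l g.
Proof. by rewrite linD linN. Qed.
Lemma linE f : l f = \sum_(m <- msupp f) f@_m * l 'X_[m].
Proof. by rewrite {1}[f]mpolyE lin_sum; apply: eq_bigr => m _; rewrite linZ. Qed.
End LinTheory.

Lemma lin_ext k (l1 l2 : {mpoly K[k]} -> K) : lin l1 -> lin l2 ->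
  (forall m, l1 'X_[m] = l2 'X_[m]) -> forall f, l1 f = l2 f.
Proof. by move=> h1 h2 h f; rewrite (linE h1) (linE h2); apply: eq_bigr => m _; rewrite h. Qed.

Definition ssupp k (F : {mpoly K[k]}) (c : 'X_{1..k} -> K) :=
  \sum_(m <- msupp F) F@_m * c m.

Lemma mderivXU' k (v w : 'I_k) : mderiv v ('X_w : {mpoly K[k]}) = (w == v)%:R.
Proof.
rewrite mderivX mnm1E; case: eqP => [->|_]; last by rewrite scale0r.
have -> : (U_(v) - U_(v) = 0)%MM by apply/mnmP => i; rewrite mnmBE subnn mnm0E.
by rewrite mpolyX0 scale1r.
Qed.

Lemma ssuppw k (F : {mpoly K[k]}) c d : (msize F <= d)%N ->
  ssupp F c = \sum_(m : 'X_{1..k < d}) F@_m * c m.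
Proof.
move=> lt_pk; pose I : subFinType _ := 'X_{1..k < d}.
rewrite /ssupp (ssrcomplements.big_mksub I) //=; first last.
  by move=> x /msize_mdeg_lt /leq_trans; apply.
  by rewrite msupp_uniq.
by rewrite big_rmcond //= => i; move/memN_msupp_eq0 ->; rewrite mul0r.
Qed.

Lemma ssupp_lin k (c : 'X_{1..k} -> K) : lin (fun F => ssupp F c).
Proof.
move=> a f g; set d := maxn (msize f) (msize g).
have hf : (msize f <= d)%N by rewrite leq_maxl.
have hg : (msize g <= d)%N by rewrite leq_maxr.
have hfg : (msize (a *: f + g) <= d)%N.
  apply: leq_trans (msizeD_le _ _) _; rewrite geq_max hg andbT.
  exact: leq_trans (msizeZ_le _ _) hf.
rewrite (ssuppw _ hf) (ssuppw _ hg) (ssuppw _ hfg) mulr_sumr -big_split /=.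
by apply: eq_bigr => m _; rewrite mcoeffD mcoeffZ mulrDl mulrA.
Qed.

End Gen.
Section LinComb.
Variables (K : fieldType) (V : vectType K) (n : nat) (b : n.-tuple V) (w : 'I_n -> V).
Definition lincomb (z : V) : V := \sum_(i < n) coord b i z *: w i.
Lemma lincomb_is_linear : linear lincomb.
Proof.
move=> a u v; rewrite /lincomb scaler_sumr -big_split; apply: eq_bigr => i _ /=.
by rewrite linearD linearZ /= scalerDl scalerA.
Qed.
HB.instance Definition _ := GRing.isLinear.Build K V V *:%R lincomb lincomb_is_linear.
End LinComb.

Section Main.
Variables (K : fieldType) (n : nat).
Local Notation Pol := (Pol K n).
Local Notation Pol2 := (Pol2 K n).
Local Notation Nv := (Nv n).
Local Notation G := (Gv K).
Local Notation Gb := (Gbv K).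

Definition mat := 'I_n -> 'I_n -> K.

Definition dvar (M : mat) (x : Idx n) : Pol :=
  let: (bar, (i, j)) := x in
  if bar then \sum_(k < n) M i k *: Gb k j else - \sum_(k < n) M k j *: G i k.

Definition Dd (M : mat) (f : Pol) : Pol :=
  \sum_(v < Nv) mderiv v f * dvar M (enum_val v).

Lemma mderivXU (v w : 'I_Nv) : mderiv v ('X_w : Pol) = (w == v)%:R.
Proof.
rewrite mderivX mnm1E; case: eqP => [->|_]; last by rewrite scale0r.
have -> : (U_(v) - U_(v) = 0)%MM by apply/mnmP => i; rewrite mnmBE subnn mnm0E.
by rewrite mpolyX0 scale1r.
Qed.

Lemma gen_X (Q : 'I_Nv -> Prop) :
  (forall i j, Q (enum_rank ((false, (i, j)) : Idx n))) ->
  (forall i j, Q (enum_rank ((true, (i, j)) : Idx n))) -> forall v, Q v.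
Proof. by move=> h1 h2 v; rewrite -(enum_valK v); case: (enum_val v) => [[] [i j]]. Qed.

Lemma DdX M v : Dd M 'X_v = dvar M (enum_val v).
Proof.
rewrite /Dd (bigD1 v) //= mderivXU eqxx mul1r big1 ?addr0 // => w /negPf nw.
by rewrite mderivXU eq_sym nw mul0r.
Qed.

Lemma DdG M i j : Dd M (G i j) = - \sum_(k < n) M k j *: G i k.
Proof. by rewrite /Gv DdX enum_rankK. Qed.

Lemma DdGb M i j : Dd M (Gb i j) = \sum_(k < n) M i k *: Gb k j.
Proof. by rewrite /Gbv DdX enum_rankK. Qed.

Lemma Dd_der M : isDer (@id Pol) (Dd M).
Proof.
split.
- by move=> p q; rewrite /Dd -big_split; apply: eq_bigr => v _; rewrite mderivD mulrDl.
- move=> c p; rewrite /Dd mulr_sumr; apply: eq_bigr => v _.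
  by rewrite mderivZ mul_mpolyC scalerAl.
- move=> p q; rewrite /Dd mulr_suml mulr_sumr -big_split; apply: eq_bigr => v _ /=.
  by rewrite mderivM mulrDl -!mulrA [q * _]mulrC; congr (_ + _); rewrite mulrA.
Qed.

Lemma Dd_ext M N f : (forall k l, M k l = N k l) -> Dd M f = Dd N f.
Proof.
move=> h; apply: eq_bigr => v _; congr (_ * _).
case: (enum_val v) => [[] [i j]] /=.
  by apply: eq_bigr => k _; rewrite h.
by congr (- _); apply: eq_bigr => k _; rewrite h.
Qed.

Lemma Dd_sumM (c : 'I_n -> K) (Md : 'I_n -> mat) f :
  Dd (fun k l => \sum_(d < n) c d * Md d k l) f = \sum_(d < n) c d *: Dd (Md d) f.
Proof.
rewrite /Dd; under [RHS]eq_bigr do rewrite scaler_sumr.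
rewrite exchange_big /=; apply: eq_bigr => v _.
under [RHS]eq_bigr do rewrite scalerAr.
rewrite -mulr_sumr; congr (_ * _).
case: (enum_val v) => [[] [i j]] /=.
  under [RHS]eq_bigr do rewrite scaler_sumr.
  rewrite [RHS]exchange_big /=; apply: eq_bigr => k _.
  by rewrite scaler_suml; apply: eq_bigr => d _; rewrite scalerA.
under [RHS]eq_bigr do rewrite scalerN scaler_sumr.
rewrite sumrN; congr (- _).
rewrite [RHS]exchange_big /=; apply: eq_bigr => k _.
by rewrite scaler_suml; apply: eq_bigr => d _; rewrite scalerA.
Qed.

Lemma Dd0 M f : (forall k l, M k l = 0) -> Dd M f = 0.
Proof.
move=> h; rewrite /Dd big1 // => v _.
case: (enum_val v) => [[] [i j]] /=.
  by rewrite big1 ?mulr0 // => k _; rewrite h scale0r.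
by rewrite big1 ?oppr0 ?mulr0 // => k _; rewrite h scale0r.
Qed.


Definition tens (phi psi : Pol -> K) (F : Pol2) : K :=
  ssupp F (fun m => phi 'X_[mnmL m] * psi 'X_[mnmR m]).

Lemma pair2E pr u v F : pair2 pr u v F = tens (pr u) (pr v) F.
Proof. by rewrite /pair2 /tens /ssupp; apply: eq_bigr => m _; rewrite mulrA. Qed.

Lemma tens_lin phi psi : lin (tens phi psi).
Proof. exact: ssupp_lin. Qed.

Lemma tens_ext phi1 psi1 phi2 psi2 F : (forall f, phi1 f = phi2 f) -> (forall f, psi1 f = psi2 f) ->
  tens phi1 psi1 F = tens phi2 psi2 F.
Proof. by move=> h1 h2; apply: eq_bigr => m _; rewrite h1 h2. Qed.

Definition liftL (f : Pol) : Pol2 := f \mPo [tuple XL K i | i < Nv].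
Definition liftR (f : Pol) : Pol2 := f \mPo [tuple XR K i | i < Nv].

Lemma liftLX i : liftL 'X_i = XL K i.
Proof. by rewrite /liftL comp_mpolyXU -tnth_nth tnth_mktuple. Qed.
Lemma liftRX i : liftR 'X_i = XR K i.
Proof. by rewrite /liftR comp_mpolyXU -tnth_nth tnth_mktuple. Qed.

Lemma splitL (i : 'I_Nv) : split (lshift Nv i) = inl i.
Proof. exact: (unsplitK (inl i)). Qed.
Lemma splitR (i : 'I_Nv) : split (rshift Nv i) = inr i.
Proof. exact: (unsplitK (inr i)). Qed.

Lemma XmE (m : 'X_{1..Nv + Nv}) : ('X_[m] : Pol2) = liftL 'X_[mnmL m] * liftR 'X_[mnmR m].
Proof.
rewrite /liftL /liftR !comp_mpolyX mpolyXE_id big_split_ord /=.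
by congr (_ * _); apply: eq_bigr => i _; rewrite tnth_mktuple mnmE.
Qed.

Definition mm (a b : 'X_{1..Nv}) : 'X_{1..Nv + Nv} :=
  [multinom (match split j with inl i => a i | inr i => b i end) | j < Nv + Nv].

Lemma mnmL_mm a b : mnmL (mm a b) = a.
Proof. by apply/mnmP => i; rewrite !mnmE splitL. Qed.
Lemma mnmR_mm a b : mnmR (mm a b) = b.
Proof. by apply/mnmP => i; rewrite !mnmE splitR. Qed.

Lemma tens_XX phi psi a b :
  tens phi psi (liftL 'X_[a] * liftR 'X_[b]) = phi 'X_[a] * psi 'X_[b].
Proof.
have -> : liftL 'X_[a] * liftR 'X_[b] = 'X_[mm a b] by rewrite XmE mnmL_mm mnmR_mm.
by rewrite /tens /ssupp msuppX big_seq1 mcoeffX eqxx mul1r mnmL_mm mnmR_mm.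
Qed.

Lemma liftL_lin a f g : liftL (a *: f + g) = a *: liftL f + liftL g.
Proof. by rewrite /liftL comp_mpolyD comp_mpolyZ. Qed.

Lemma tens_LR phi psi : lin phi -> lin psi -> forall f g,
  tens phi psi (liftL f * liftR g) = phi f * psi g.
Proof.
move=> hphi hpsi f g.
rewrite {1}[f]mpolyE {1}[g]mpolyE /liftL /liftR !raddf_sum /= mulr_suml (lin_sum (tens_lin _ _)).
rewrite (linE hphi f) (linE hpsi g) mulr_suml; apply: eq_bigr => a _.
rewrite mulr_sumr (lin_sum (tens_lin _ _)) mulr_sumr; apply: eq_bigr => b _.
rewrite !comp_mpolyZ -scalerAl -scalerAr !(linZ (tens_lin _ _)) tens_XX.
by rewrite -!mulrA; congr (_ * _); rewrite mulrCA.
Qed.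

Lemma tens_uniq (l1 l2 : Pol2 -> K) : lin l1 -> lin l2 ->
  (forall f g, l1 (liftL f * liftR g) = l2 (liftL f * liftR g)) -> forall F, l1 F = l2 F.
Proof. by move=> h1 h2 h; apply: lin_ext => // m; rewrite XmE h. Qed.

(* the derivation id (x) D on P (x) P *)
Definition Dt (M : mat) (F : Pol2) : Pol2 :=
  \sum_(v < Nv) mderiv (rshift Nv v) F * liftR (dvar M (enum_val v)).

Lemma Dt_der M : isDer (@id Pol2) (Dt M).
Proof.
split.
- by move=> p q; rewrite /Dt -big_split; apply: eq_bigr => v _; rewrite mderivD mulrDl.
- move=> c p; rewrite /Dt mulr_sumr; apply: eq_bigr => v _.
  by rewrite mderivZ mul_mpolyC scalerAl.
- move=> p q; rewrite /Dt mulr_suml mulr_sumr -big_split; apply: eq_bigr => v _ /=.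
  by rewrite mderivM mulrDl -!mulrA [q * _]mulrC; congr (_ + _); rewrite mulrA.
Qed.

Lemma liftL_der M : isDer liftL (fun f => Dt M (liftL f)).
Proof.
split.
- by move=> p q; rewrite /liftL comp_mpolyD (derD (Dt_der M)).
- by move=> c p; rewrite /liftL comp_mpolyZ (derZ (Dt_der M)) comp_mpolyC.
- by move=> p q; rewrite /liftL rmorphM (derM (Dt_der M)).
Qed.

Lemma liftR_der M : isDer liftR (fun f => Dt M (liftR f)).
Proof.
split.
- by move=> p q; rewrite /liftR comp_mpolyD (derD (Dt_der M)).
- by move=> c p; rewrite /liftR comp_mpolyZ (derZ (Dt_der M)) comp_mpolyC.
- by move=> p q; rewrite /liftR rmorphM (derM (Dt_der M)).
Qed.

Lemma Dt_L M f : Dt M (liftL f) = 0.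
Proof.
apply: (@der_uniq _ _ _ liftL (fun f => Dt M (liftL f)) (fun _ => 0)) => //.
- by rewrite /liftL comp_mpoly1.
- exact: liftL_der.
- by split => *; rewrite ?addr0 ?mulr0 ?mul0r ?addr0.
- move=> i; rewrite liftLX /Dt big1 // => v _.
  by rewrite /XL mderivXU' eq_lrshift mul0r.
Qed.

Lemma Dt_R M g : Dt M (liftR g) = liftR (Dd M g).
Proof.
apply: (@der_uniq _ _ _ liftR (fun f => Dt M (liftR f)) (fun f => liftR (Dd M f))) => //.
- by rewrite /liftR comp_mpoly1.
- exact: liftR_der.
- split.
  + by move=> p q; rewrite (derD (Dd_der M)) /liftR comp_mpolyD.
  + by move=> c p /=; rewrite (derZ (Dd_der M)) /liftR rmorphM /= comp_mpolyC.
  + by move=> p q; rewrite (derM (Dd_der M)) /liftR rmorphD !rmorphM.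
- move=> i; rewrite liftRX DdX /Dt (bigD1 i) //= big1 ?addr0.
    by rewrite /XR mderivXU' eqxx mul1r.
  by move=> v /negPf nv; rewrite /XR mderivXU' eq_rshift eq_sym nv mul0r.
Qed.

Lemma Dt_LR M f g : Dt M (liftL f * liftR g) = liftL f * liftR (Dd M g).
Proof. by rewrite (derM (Dt_der M)) Dt_L Dt_R mul0r add0r. Qed.

Lemma Dd_lin (l : Pol -> K) M : lin l -> lin (fun g => l (Dd M g)).
Proof.
move=> hl a f g /=; rewrite (derD (Dd_der M)) (derZ (Dd_der M)) /= mul_mpolyC.
by rewrite hl.
Qed.

Lemma Dt_lin (l : Pol2 -> K) M : lin l -> lin (fun g => l (Dt M g)).
Proof.
move=> hl a f g /=; rewrite (derD (Dt_der M)) (derZ (Dt_der M)) /= mul_mpolyC.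
by rewrite hl.
Qed.

Lemma tens_D phi psi M : lin phi -> lin psi -> forall F,
  tens phi (fun g => psi (Dd M g)) F = tens phi psi (Dt M F).
Proof.
move=> h1 h2; apply: tens_uniq.
- exact: tens_lin.
- exact: (Dt_lin M (tens_lin phi psi)).
- move=> f g; rewrite tens_LR //; last exact: Dd_lin.
  by rewrite Dt_LR tens_LR.
Qed.

Lemma DeltaX x : DeltaO ('X_(enum_rank x) : Pol) = Delta_var K x.
Proof. by rewrite /DeltaO comp_mpolyXU -tnth_nth tnth_mktuple enum_rankK. Qed.

Lemma XLE (x : Idx n) : XL K (enum_rank x) = liftL 'X_(enum_rank x).
Proof. by rewrite liftLX. Qed.
Lemma XRE (x : Idx n) : XR K (enum_rank x) = liftR 'X_(enum_rank x).
Proof. by rewrite liftRX. Qed.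

Lemma DeltaG i j : DeltaO (G i j) =
  \sum_(k < n) liftL (G i k) * liftR (G k j).
Proof. by rewrite /Gv DeltaX /=; apply: eq_bigr => k _; rewrite XLE XRE. Qed.

Lemma DeltaGb i j : DeltaO (Gb i j) =
  \sum_(k < n) liftL (Gb k j) * liftR (Gb i k).
Proof. by rewrite /Gbv DeltaX /=; apply: eq_bigr => k _; rewrite XLE XRE. Qed.

Lemma DeltaO1 : @DeltaO K n 1 = 1.
Proof. exact: comp_mpoly1. Qed.

Lemma Delta_der M : isDer (@DeltaO K n) (fun f => DeltaO (Dd M f)).
Proof.
split.
- by move=> p q /=; rewrite (derD (Dd_der M)) /DeltaO comp_mpolyD.
- by move=> c p /=; rewrite (derZ (Dd_der M)) /DeltaO rmorphM /= comp_mpolyC.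
- by move=> p q /=; rewrite (derM (Dd_der M)) /DeltaO rmorphD !rmorphM.
Qed.

Lemma DtDelta_der M : isDer (@DeltaO K n) (fun f => Dt M (DeltaO f)).
Proof.
split.
- by move=> p q /=; rewrite /DeltaO comp_mpolyD (derD (Dt_der M)).
- by move=> c p /=; rewrite /DeltaO comp_mpolyZ (derZ (Dt_der M)) comp_mpolyC.
- by move=> p q /=; rewrite /DeltaO rmorphM (derM (Dt_der M)).
Qed.

Lemma liftR_lin a f g : liftR (a *: f + g) = a *: liftR f + liftR g.
Proof. by rewrite /liftR comp_mpolyD comp_mpolyZ. Qed.
Lemma liftR_sum I (r : seq I) (P : pred I) F :
  liftR (\sum_(i <- r | P i) F i) = \sum_(i <- r | P i) liftR (F i).
Proof. by rewrite /liftR raddf_sum. Qed.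
Lemma liftR_Z a f : liftR (a *: f) = a *: liftR f.
Proof. by rewrite /liftR comp_mpolyZ. Qed.
Lemma liftR_N f : liftR (- f) = - liftR f.
Proof. by rewrite /liftR raddfN. Qed.
Lemma DeltaO_sum I (r : seq I) (P : pred I) F :
  DeltaO (\sum_(i <- r | P i) F i) = \sum_(i <- r | P i) @DeltaO K n (F i).
Proof. by rewrite /DeltaO raddf_sum. Qed.
Lemma DeltaO_Z a f : @DeltaO K n (a *: f) = a *: DeltaO f.
Proof. by rewrite /DeltaO comp_mpolyZ. Qed.
Lemma DeltaO_N f : @DeltaO K n (- f) = - DeltaO f.
Proof. by rewrite /DeltaO raddfN. Qed.

Lemma Delta_D M f : DeltaO (Dd M f) = Dt M (DeltaO f).
Proof.
move: f; apply: (der_uniq DeltaO1 (Delta_der M) (DtDelta_der M)).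
apply: gen_X => i j /=; rewrite -?/(Gv K i j) -?/(Gbv K i j).
- rewrite DdG DeltaG (der_sum (Dt_der M)).
  under [RHS]eq_bigr do rewrite Dt_LR DdG liftR_N liftR_sum mulrN mulr_sumr.
  rewrite sumrN DeltaO_N DeltaO_sum; congr (- _).
  rewrite exchange_big; apply: eq_bigr => k _.
  rewrite DeltaO_Z DeltaG scaler_sumr; apply: eq_bigr => l _.
  by rewrite liftR_Z scalerAr.
- rewrite DdGb DeltaGb (der_sum (Dt_der M)).
  under [RHS]eq_bigr do rewrite Dt_LR DdGb liftR_sum mulr_sumr.
  rewrite DeltaO_sum exchange_big; apply: eq_bigr => k _.
  rewrite DeltaO_Z DeltaGb scaler_sumr; apply: eq_bigr => l _.
  by rewrite liftR_Z scalerAr.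
Qed.

Definition Emap (F : Pol2) : Pol :=
  F \mPo [tuple (match split j with inl i => 'X_i | inr i => (epsO ('X_i : Pol))%:MP end) | j < Nv + Nv].

Lemma epsO_lin : lin (@epsO K n).
Proof. by move=> a f g; rewrite /epsO mevalD mevalZ. Qed.
Lemma epsOM f g : @epsO K n (f * g) = epsO f * epsO g.
Proof. by rewrite /epsO mevalM. Qed.
Lemma epsO1 : @epsO K n 1 = 1.
Proof. by rewrite /epsO meval1. Qed.
Lemma epsOC c : @epsO K n c%:MP = c.
Proof. by rewrite /epsO mevalC. Qed.
Lemma epsOG (i j : 'I_n) : epsO (G i j) = (i == j)%:R.
Proof. by rewrite /epsO /Gv mevalXU enum_rankK. Qed.
Lemma epsOGb (i j : 'I_n) : epsO (Gb i j) = (i == j)%:R.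
Proof. by rewrite /epsO /Gbv mevalXU enum_rankK. Qed.

Lemma Emap_L f : Emap (liftL f) = f.
Proof.
move: f; apply: mpoly_gen_ind.
- by rewrite /liftL /Emap !comp_mpoly1.
- by move=> i; rewrite liftLX /Emap /XL comp_mpolyXU -tnth_nth tnth_mktuple splitL.
- by move=> c p Hp; rewrite /liftL /Emap !comp_mpolyZ -/(liftL p) -/(Emap _) Hp.
- by move=> p q Hp Hq; rewrite /liftL /Emap !comp_mpolyD -/(liftL p) -/(liftL q) -!/(Emap _) Hp Hq.
- by move=> p q Hp Hq; rewrite /liftL /Emap !rmorphM /= -/(liftL p) -/(liftL q) -!/(Emap _) Hp Hq.
Qed.

Lemma Emap_R f : Emap (liftR f) = (epsO f)%:MP.
Proof.
move: f; apply: mpoly_gen_ind.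
- by rewrite /liftR /Emap !comp_mpoly1 epsO1.
- by move=> i; rewrite liftRX /Emap /XR comp_mpolyXU -tnth_nth tnth_mktuple splitR.
- move=> c p Hp; rewrite /liftR /Emap !comp_mpolyZ -/(liftR p) -/(Emap _) Hp.
  by rewrite (linZ epsO_lin) mpolyCM mul_mpolyC.
- move=> p q Hp Hq; rewrite /liftR /Emap !comp_mpolyD -/(liftR p) -/(liftR q) -!/(Emap _) Hp Hq.
  by rewrite (linD epsO_lin) mpolyCD.
- move=> p q Hp Hq; rewrite /liftR /Emap !rmorphM /= -/(liftR p) -/(liftR q) -!/(Emap _) Hp Hq.
  by rewrite epsOM mpolyCM.
Qed.

Lemma Emap_LR f g : Emap (liftL f * liftR g) = epsO g *: f.
Proof. by rewrite /Emap rmorphM /= -!/(Emap _) Emap_L Emap_R mulrC mul_mpolyC. Qed.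

Lemma Emap_sum I (r : seq I) (P : pred I) F :
  Emap (\sum_(i <- r | P i) F i) = \sum_(i <- r | P i) Emap (F i).
Proof. by rewrite /Emap raddf_sum. Qed.

Lemma Emap_Delta f : Emap (DeltaO f) = f.
Proof.
move: f; apply: mpoly_gen_ind.
- by rewrite /Emap /DeltaO !comp_mpoly1.
- apply: gen_X => i j; rewrite -?/(Gv K i j) -?/(Gbv K i j).
  + rewrite DeltaG Emap_sum (bigD1 j) //= big1 ?addr0.
      by rewrite Emap_LR epsOG eqxx scale1r.
    by move=> k /negPf nk; rewrite Emap_LR epsOG nk scale0r.
  + rewrite DeltaGb Emap_sum (bigD1 i) //= big1 ?addr0.
      by rewrite Emap_LR epsOGb eqxx scale1r.
    by move=> k /negPf nk; rewrite Emap_LR epsOGb eq_sym nk scale0r.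
- by move=> c p Hp; rewrite /DeltaO /Emap !comp_mpolyZ -/(DeltaO p) -/(Emap _) Hp.
- by move=> p q Hp Hq; rewrite /DeltaO /Emap !comp_mpolyD -/(DeltaO p) -/(DeltaO q) -!/(Emap _) Hp Hq.
- by move=> p q Hp Hq; rewrite /DeltaO /Emap !rmorphM /= -/(DeltaO p) -/(DeltaO q) -!/(Emap _) Hp Hq.
Qed.

Lemma Emap_lin (l : Pol -> K) : lin l -> lin (fun F => l (Emap F)).
Proof. by move=> hl a f g /=; rewrite /Emap comp_mpolyD comp_mpolyZ hl. Qed.

Lemma tens_eps phi : lin phi -> forall F, tens phi (@epsO K n) F = phi (Emap F).
Proof.
move=> hphi; apply: tens_uniq; [exact: tens_lin | exact: Emap_lin |].
by move=> f g; rewrite tens_LR //; [rewrite Emap_LR (linZ hphi) mulrC | exact: epsO_lin].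
Qed.

Section Words.
Variable Rf : 'I_n -> mat.

Definition Dw (w : seq 'I_n) (f : Pol) : Pol := foldr (fun a g => Dd (Rf a) g) f w.
Definition prw (w : seq 'I_n) (f : Pol) : K := epsO (Dw w f).

Lemma Dw_cat u v f : Dw (u ++ v) f = Dw u (Dw v f).
Proof. by rewrite /Dw foldr_cat. Qed.

Lemma DwD w f g : Dw w (f + g) = Dw w f + Dw w g.
Proof. by elim: w => //= a w IH; rewrite IH (derD (Dd_der _)). Qed.
Lemma DwZ w c f : Dw w (c *: f) = c *: Dw w f.
Proof. by elim: w => //= a w IH; rewrite IH (derZ (Dd_der _)) mul_mpolyC. Qed.
Lemma Dw0 w : Dw w 0 = 0.
Proof. by have := DwZ w 0 0; rewrite !scale0r. Qed.
Lemma DwN w f : Dw w (- f) = - Dw w f.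
Proof. by rewrite -scaleN1r DwZ scaleN1r. Qed.
Lemma Dw_sum w I (r : seq I) (P : pred I) F :
  Dw w (\sum_(i <- r | P i) F i) = \sum_(i <- r | P i) Dw w (F i).
Proof.
elim: r => [|x r IH]; first by rewrite !big_nil Dw0.
by rewrite !big_cons; case: (P x); rewrite ?DwD IH.
Qed.

Lemma Dw_lin (l : Pol -> K) w : lin l -> lin (fun g => l (Dw w g)).
Proof. by move=> hl a f g /=; rewrite DwD DwZ hl. Qed.

Lemma prw_lin w : lin (prw w).
Proof. exact: (Dw_lin w epsO_lin). Qed.

Lemma tens_Dw phi : lin phi -> forall v psi f, lin psi ->
  tens phi (fun g => psi (Dw v g)) (DeltaO f) = tens phi psi (DeltaO (Dw v f)).
Proof.
move=> hphi; elim=> [|a v IH] psi f hpsi //=.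
have := IH (fun h => psi (Dd (Rf a) h)) f (Dd_lin _ hpsi) => /= ->.
by rewrite tens_D // Delta_D.
Qed.

Lemma prw_cat u v f : prw (u ++ v) f = tens (prw u) (prw v) (DeltaO f).
Proof.
rewrite /prw Dw_cat (tens_Dw (prw_lin u) v f epsO_lin) tens_eps; last exact: prw_lin.
by rewrite /prw Emap_Delta.
Qed.

End Words.

Section TupleSums.
Variables (T : finType) (W : nmodType).
Lemma big_tuple_cons k (F : k.+1.-tuple T -> W) :
  \sum_(t : k.+1.-tuple T) F t = \sum_(x : T) \sum_(t : k.-tuple T) F [tuple of x :: t].
Proof.
rewrite pair_big /=.
rewrite (reindex (fun p : T * k.-tuple T => [tuple of p.1 :: p.2])) //=.
exists (fun t : k.+1.-tuple T => (thead t, [tuple of behead t])).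
  move=> [x t] _ /=.
  rewrite theadE; congr (_, _); exact: val_inj.
by move=> t _ /=; rewrite [RHS]tuple_eta.
Qed.
Lemma big_tuple_nil (F : 0.-tuple T -> W) : \sum_(t : 0.-tuple T) F t = F [tuple].
Proof. by rewrite (big_pred1 [tuple]) // => t /=; symmetry; apply/eqP; exact: tuple0. Qed.
End TupleSums.

Section Words2.
Variable Rf : 'I_n -> mat.
Local Notation Dw := (Dw Rf).
Local Notation prw := (prw Rf).

Lemma Dw_shuffle w f g : Dw w (f * g) =
  \sum_(m : (size w).-tuple bool) Dw (mask m w) f * Dw (mask (map negb m) w) g.
Proof.
elim: w => [|a w IH]; first by rewrite big_tuple_nil.
rewrite big_tuple_cons big_bool /= IH (der_sum (Dd_der _)) -big_split /=.
by apply: eq_bigr => m _; rewrite (derM (Dd_der _)) /= addrC.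
Qed.

Lemma prw_shuffle w f g : prw w (f * g) =
  \sum_(m : (size w).-tuple bool) prw (mask m w) f * prw (mask (map negb m) w) g.
Proof.
rewrite /prw Dw_shuffle (lin_sum epsO_lin); apply: eq_bigr => m _; exact: epsOM.
Qed.

Lemma Dw_cons1 a w : Dw (a :: w) 1 = 0.
Proof.
elim: w a => [|c w IH] a /=; first exact: (der1 _ (Dd_der _)).
by have := IH c => /= ->; rewrite (der0 (Dd_der _)).
Qed.

Lemma prw1 w : prw w 1 = (w == [::])%:R.
Proof. by rewrite /prw; case: w => [|a w]; [rewrite /= epsO1 | rewrite Dw_cons1 /epsO meval0]. Qed.

End Words2.

Lemma comm_der (L1 L2 : Pol -> Pol) : isDer id L1 -> isDer id L2 ->
  isDer id (fun f => L1 (L2 f) - L2 (L1 f)).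
Proof.
move=> d1 d2; split => /=.
- by move=> p q; rewrite !(derD d1) !(derD d2) !(derD d1) opprD addrACA.
- move=> c p; rewrite !(derZ d1) !(derZ d2) !(derM d1) !(derM d2).
  rewrite !(derC _ d1) // !(derC _ d2) //.
  by rewrite !mul0r !add0r mulrBr.
- move=> p q; rewrite !(derM d1) !(derM d2) !(derD d1) !(derD d2) !(derM d1) !(derM d2) /=.
  ring.
Qed.

Lemma DdGsum M (c : 'I_n -> K) i :
  Dd M (\sum_(k < n) c k *: G i k) = - \sum_(l < n) (\sum_(k < n) M l k * c k) *: G i l.
Proof.
rewrite (der_sum (Dd_der M)).
under eq_bigr do rewrite (derZ (Dd_der M)) /= mul_mpolyC DdG scalerN scaler_sumr.
rewrite sumrN exchange_big /=; congr (- _); apply: eq_bigr => l _.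
by rewrite scaler_suml; apply: eq_bigr => k _; rewrite scalerA mulrC.
Qed.

Lemma DdGbsum M (c : 'I_n -> K) j :
  Dd M (\sum_(k < n) c k *: Gb k j) = \sum_(l < n) (\sum_(k < n) c k * M k l) *: Gb l j.
Proof.
rewrite (der_sum (Dd_der M)).
under eq_bigr do rewrite (derZ (Dd_der M)) /= mul_mpolyC DdGb scaler_sumr.
rewrite exchange_big /=; apply: eq_bigr => l _.
by rewrite scaler_suml; apply: eq_bigr => k _; rewrite scalerA.
Qed.

Lemma Dd_comm M N f : Dd M (Dd N f) - Dd N (Dd M f) =
  Dd (fun k l => \sum_(p < n) (N k p * M p l - M k p * N p l)) f.
Proof.
move: f; apply: (der_uniq (phi := id)) => //.
- exact: comm_der (Dd_der M) (Dd_der N).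
- exact: Dd_der.
apply: gen_X => i j; rewrite -?/(Gv K i j) -?/(Gbv K i j).
- rewrite !DdG !(derN (Dd_der _)) //= !DdGsum !opprK -sumrB -sumrN.
  apply: eq_bigr => l _; rewrite -scalerBl -scaleNr; congr (_ *: _).
  by rewrite -sumrB -sumrN; apply: eq_bigr => p _; rewrite opprB.
- rewrite !DdGb !DdGbsum -sumrB.
  apply: eq_bigr => l _; rewrite -scalerBl; congr (_ *: _).
  by rewrite -sumrB.
Qed.

Lemma derNat (k : nat) (A : pzRingType) (phi : {mpoly K[k]} -> A) L :
  phi 1 = 1 -> isDer phi L -> forall m : nat, L m%:R = 0.
Proof.
move=> p1 dL; elim=> [|m IH]; first exact: (der0 dL).
by rewrite -addn1 natrD (derD dL) (der1 p1 dL) IH addr0.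
Qed.

Section Bracket.
Variables (V : vectType K) (br : V -> V -> V) (b : n.-tuple V).
Hypotheses (hbil : bilinear_bracket br) (hleib : right_leibniz br)
  (hb : basis_of fullv b).
Local Notation C := (Cst br b).

Lemma br0l z : br 0 z = 0.
Proof. by case: hbil => h _; have := h 1 0 0 z; rewrite !scale1r addr0 => /(congr1 (fun t => t - br 0 z)); rewrite subrr addrK. Qed.
Lemma br0r z : br z 0 = 0.
Proof. by case: hbil => _ h; have := h 1 0 0 z; rewrite !scale1r addr0 => /(congr1 (fun t => t - br z 0)); rewrite subrr addrK. Qed.
Lemma brDl x y z : br (x + y) z = br x z + br y z.
Proof. by case: hbil => h _; have := h 1 x y z; rewrite !scale1r. Qed.
Lemma brDr x y z : br z (x + y) = br z x + br z y.
Proof. by case: hbil => _ h; have := h 1 x y z; rewrite !scale1r. Qed.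
Lemma brZl a x z : br (a *: x) z = a *: br x z.
Proof. by case: hbil => h _; have := h a x 0 z; rewrite !addr0 br0l addr0. Qed.
Lemma brZr a x z : br z (a *: x) = a *: br z x.
Proof. by case: hbil => _ h; have := h a x 0 z; rewrite !addr0 br0r addr0. Qed.
Lemma br_suml I (r : seq I) (P : pred I) F z :
  br (\sum_(i <- r | P i) F i) z = \sum_(i <- r | P i) br (F i) z.
Proof.
elim: r => [|x r IH]; first by rewrite !big_nil br0l.
by rewrite !big_cons; case: (P x); rewrite ?brDl IH.
Qed.
Lemma br_sumr I (r : seq I) (P : pred I) F z :
  br z (\sum_(i <- r | P i) F i) = \sum_(i <- r | P i) br z (F i).
Proof.
elim: r => [|x r IH]; first by rewrite !big_nil br0r.
by rewrite !big_cons; case: (P x); rewrite ?brDr IH.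
Qed.

Lemma b_expand u : u = \sum_(i < n) coord b i u *: tnth b i.
Proof.
rewrite {1}(coord_basis hb (memvf u)); apply: eq_bigr => i _.
by rewrite (tnth_nth 0).
Qed.

Lemma Cexp_l u z k :
  \sum_(p < n) coord b p u * coord b k (br (tnth b p) z) = coord b k (br u z).
Proof.
rewrite [in RHS](b_expand u) br_suml linear_sum; apply: eq_bigr => p _.
by rewrite brZl linearZ.
Qed.

Lemma Cexp_r u z k :
  \sum_(p < n) coord b p u * coord b k (br z (tnth b p)) = coord b k (br z u).
Proof.
rewrite [in RHS](b_expand u) br_sumr linear_sum; apply: eq_bigr => p _.
by rewrite brZr linearZ.
Qed.

Definition Rm (a : 'I_n) : mat := fun k l => C k l a.

Lemma lie_id a c k l :
  \sum_(p < n) (Rm c k p * Rm a p l - Rm a k p * Rm c p l) =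
  \sum_(d < n) C d a c * Rm d k l.
Proof.
rewrite /Rm /Cst sumrB.
rewrite (eq_bigr (fun p => coord b p (br (tnth b l) (tnth b a)) * coord b k (br (tnth b p) (tnth b c)))); last by move=> p _; rewrite mulrC.
rewrite [X in _ - X](eq_bigr (fun p => coord b p (br (tnth b l) (tnth b c)) * coord b k (br (tnth b p) (tnth b a)))); last by move=> p _; rewrite mulrC.
rewrite !Cexp_l Cexp_r -linearB /= hleib.
by rewrite addrAC subrr add0r.
Qed.

Lemma hom_id i j a s :
  \sum_(r < n) C r i j * Rm a s r =
  \sum_(p < n) Rm a p i * C s p j + \sum_(p < n) Rm a p j * C s i p.
Proof.
rewrite /Rm /Cst !Cexp_l Cexp_r.
by rewrite -linearD /= hleib.
Qed.



Lemma DdN M f : Dd M (- f) = - Dd M f.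
Proof. exact: (derN (Dd_der M)). Qed.
Lemma DdB M f g : Dd M (f - g) = Dd M f - Dd M g.
Proof. exact: (derB (Dd_der M)). Qed.
Lemma DdM M f g : Dd M (f * g) = Dd M f * g + f * Dd M g.
Proof. exact: (derM (Dd_der M)). Qed.
Lemma Dd_sum M I (r : seq I) (P : pred I) F :
  Dd M (\sum_(i <- r | P i) F i) = \sum_(i <- r | P i) Dd M (F i).
Proof. exact: (der_sum (Dd_der M)). Qed.
Lemma DdZ M c f : Dd M (c *: f) = c *: Dd M f.
Proof. by rewrite (derZ (Dd_der M)) mul_mpolyC. Qed.
Lemma Dd_nat M m : Dd M m%:R = 0.
Proof. exact: (derNat (erefl _) (Dd_der M)). Qed.

Lemma Dd_rel1 M i j : Dd M (rel_inv1 K i j) = 0.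
Proof.
rewrite /rel_inv1 DdB Dd_nat subr0 Dd_sum.
under eq_bigr do rewrite DdM DdG DdGb mulNr mulr_suml mulr_sumr.
rewrite big_split /= sumrN; apply/eqP; rewrite addrC subr_eq0; apply/eqP.
rewrite exchange_big; apply: eq_bigr => k _; apply: eq_bigr => l _.
by rewrite -scalerAl -scalerAr.
Qed.

Lemma delta_sum (c : 'I_n -> K) j : \sum_(l < n) c l *: ((l == j)%:R : Pol) = c j *: 1.
Proof.
rewrite (bigD1 j) //= eqxx big1 ?addr0 // => l /negPf ->; by rewrite ?mulr0n scaler0.
Qed.

Lemma Dd_rel2 M i j : Dd M (rel_inv2 K i j) =
  \sum_(l < n) M i l *: rel_inv2 K l j - \sum_(l < n) M l j *: rel_inv2 K i l.
Proof.
have eA : \sum_(l < n) M i l *: rel_inv2 K l j =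
   \sum_(l < n) \sum_(k < n) M i l *: (Gb l k * G k j) - M i j *: 1.
  rewrite /rel_inv2; under eq_bigr do rewrite scalerBr scaler_sumr.
  by rewrite sumrB delta_sum.
have eB : \sum_(l < n) M l j *: rel_inv2 K i l =
   \sum_(l < n) \sum_(k < n) M l j *: (Gb i k * G k l) - M i j *: 1.
  rewrite /rel_inv2; under eq_bigr do rewrite scalerBr scaler_sumr.
  rewrite sumrB; congr (_ - _).
  rewrite (bigD1 i) //= eqxx big1 ?addr0 // => l /negPf; rewrite eq_sym => ->; by rewrite ?mulr0n scaler0.
rewrite eA eB opprB addrA subrK.
rewrite /rel_inv2 DdB Dd_nat subr0 Dd_sum.
under eq_bigr do rewrite DdM DdG DdGb mulrN mulr_suml mulr_sumr.
rewrite big_split /= sumrN; congr (_ - _).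
  by rewrite exchange_big; apply: eq_bigr => l _; apply: eq_bigr => k _; rewrite scalerAl.
by rewrite exchange_big; apply: eq_bigr => l _; apply: eq_bigr => k _; rewrite scalerAr.
Qed.

Definition Q1 (i j k : 'I_n) : Pol :=
  \sum_(l < n) \sum_(m < n) C k l m *: (G l i * G m j).

Lemma T1 (c : 'I_n -> K) (j k : 'I_n) :
  \sum_(l < n) \sum_(m < n) C k l m *: ((\sum_(p < n) c p *: G l p) * G m j) =
  \sum_(p < n) c p *: Q1 p j k.
Proof.
rewrite /Q1; under [RHS]eq_bigr do rewrite scaler_sumr.
rewrite [RHS]exchange_big; apply: eq_bigr => l _.
under [RHS]eq_bigr do rewrite scaler_sumr.
rewrite [RHS]exchange_big; apply: eq_bigr => m _.
rewrite mulr_suml scaler_sumr; apply: eq_bigr => p _.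
by rewrite -scalerAl !scalerA mulrC.
Qed.

Lemma T2 (c : 'I_n -> K) (i k : 'I_n) :
  \sum_(l < n) \sum_(m < n) C k l m *: (G l i * (\sum_(p < n) c p *: G m p)) =
  \sum_(p < n) c p *: Q1 i p k.
Proof.
rewrite /Q1; under [RHS]eq_bigr do rewrite scaler_sumr.
rewrite [RHS]exchange_big; apply: eq_bigr => l _.
under [RHS]eq_bigr do rewrite scaler_sumr.
rewrite [RHS]exchange_big; apply: eq_bigr => m _.
rewrite mulr_sumr scaler_sumr; apply: eq_bigr => p _.
by rewrite -scalerAr !scalerA mulrC.
Qed.

Lemma DdQ1 M i j k : Dd M (Q1 i j k) =
  - \sum_(p < n) M p i *: Q1 p j k - \sum_(p < n) M p j *: Q1 i p k.
Proof.
rewrite /Q1 Dd_sum.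
under eq_bigr do rewrite Dd_sum.
under eq_bigr do under eq_bigr do rewrite DdZ DdM !DdG mulNr mulrN scalerDr !scalerN.
under eq_bigr do rewrite big_split /= !sumrN.
rewrite big_split /= !sumrN -/(Q1 _ _ _).
by rewrite (T1 (fun p => M p i)) (T2 (fun p => M p j)).
Qed.

Lemma rel_homE i j k : rel_hom br b i j k = Q1 i j k - \sum_(r < n) C r i j *: G k r.
Proof. by []. Qed.

Lemma sum_rel (c : 'I_n -> K) (X : 'I_n -> Pol) (d : 'I_n -> 'I_n -> K) k :
  \sum_(p < n) c p *: (X p - \sum_(s < n) d p s *: G k s) =
  \sum_(p < n) c p *: X p - \sum_(s < n) (\sum_(p < n) c p * d p s) *: G k s.
Proof.
under eq_bigr do rewrite scalerBr scaler_sumr.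
rewrite sumrB; congr (_ - _); rewrite exchange_big; apply: eq_bigr => s _.
by rewrite scaler_suml; apply: eq_bigr => p _; rewrite scalerA.
Qed.

Lemma Dd_relhom a i j k : Dd (Rm a) (rel_hom br b i j k) =
  - \sum_(p < n) Rm a p i *: rel_hom br b p j k - \sum_(p < n) Rm a p j *: rel_hom br b i p k.
Proof.
have -> : \sum_(p < n) Rm a p i *: rel_hom br b p j k =
   \sum_(p < n) Rm a p i *: Q1 p j k - \sum_(s < n) (\sum_(p < n) Rm a p i * C s p j) *: G k s.
  by rewrite -sum_rel.
have -> : \sum_(p < n) Rm a p j *: rel_hom br b i p k =
   \sum_(p < n) Rm a p j *: Q1 i p k - \sum_(s < n) (\sum_(p < n) Rm a p j * C s i p) *: G k s.
  by rewrite -sum_rel.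
rewrite !rel_homE DdB DdQ1 DdGsum opprK.
set A1 := \sum_(p < n) _ *: Q1 p j k; set A2 := \sum_(p < n) _ *: Q1 i p k.
have -> : \sum_(l < n) (\sum_(k0 < n) Rm a l k0 * C k0 i j) *: G k l =
   \sum_(s < n) (\sum_(p < n) Rm a p i * C s p j) *: G k s + \sum_(s < n) (\sum_(p < n) Rm a p j * C s i p) *: G k s.
  rewrite -big_split; apply: eq_bigr => s _. rewrite /= -scalerDl; congr (_ *: _).
  rewrite -hom_id; apply: eq_bigr => r _; exact: mulrC.
set S1 := \sum_(s < n) _ *: G k s; set S2 := \sum_(s < n) _ *: G k s.
by rewrite !opprB; ring.
Qed.

Inductive inI : Pol -> Prop :=
| inI0 : inI 0
| inID f g : inI f -> inI g -> inI (f + g)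
| inIM h f : inI f -> inI (h * f)
| inIhom i j k : inI (rel_hom br b i j k)
| inI1 i j : inI (rel_inv1 K i j)
| inI2 i j : inI (rel_inv2 K i j).

Lemma inIZ c f : inI f -> inI (c *: f).
Proof. by move=> h; rewrite -mul_mpolyC; apply: inIM. Qed.
Lemma inIN f : inI f -> inI (- f).
Proof. by move=> h; rewrite -scaleN1r; apply: inIZ. Qed.
Lemma inIB f g : inI f -> inI g -> inI (f - g).
Proof. by move=> hf hg; apply: inID => //; apply: inIN. Qed.
Lemma inI_sum (F : 'I_n -> Pol) : (forall p, inI (F p)) -> inI (\sum_(p < n) F p).
Proof. by move=> h; apply: big_ind => //; [exact: inI0 | exact: inID]. Qed.

Lemma Dd_inI a f : inI f -> inI (Dd (Rm a) f).
Proof.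
elim=> {f}.
- by rewrite (der0 (Dd_der _)); exact: inI0.
- by move=> f g _ hf _ hg; rewrite (derD (Dd_der _)); apply: inID.
- by move=> h f hf IHf; rewrite DdM; apply: inID; apply: inIM.
- move=> i j k; rewrite Dd_relhom; apply: inIB; first apply: inIN;
    by apply: inI_sum => p; apply: inIZ; apply: inIhom.
- by move=> i j; rewrite Dd_rel1; exact: inI0.
- by move=> i j; rewrite Dd_rel2; apply: inIB; apply: inI_sum => p; apply: inIZ; apply: inI2.
Qed.

Lemma Dw_inI w f : inI f -> inI (Dw Rm w f).
Proof. by elim: w => //= a w IH /IH; apply: Dd_inI. Qed.

Lemma epsO_nat m : @epsO K n m%:R = m%:R.
Proof.
elim: m => [|m IH]; first by rewrite /epsO meval0.
by rewrite -addn1 !natrD (linD epsO_lin) IH epsO1.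
Qed.

Lemma sum_delta (F : 'I_n -> K) i : \sum_(l < n) (i == l)%:R * F l = F i.
Proof.
rewrite (bigD1 i) //= eqxx mul1r big1 ?addr0 // => l; rewrite eq_sym => /negPf ->.
by rewrite mul0r.
Qed.
Lemma sum_delta' (F : 'I_n -> K) i : \sum_(l < n) F l * (l == i)%:R = F i.
Proof.
rewrite -[RHS](sum_delta F i); apply: eq_bigr => l _; by rewrite mulrC eq_sym.
Qed.

Lemma epsO_inI f : inI f -> epsO f = 0.
Proof.
elim=> {f}.
- exact: (lin0 epsO_lin).
- by move=> f g _ hf _ hg; rewrite (linD epsO_lin) hf hg addr0.
- by move=> h f _ hf; rewrite epsOM hf mulr0.
- move=> i j k; rewrite rel_homE (linB epsO_lin) !(lin_sum epsO_lin).
  under eq_bigr do rewrite (lin_sum epsO_lin).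
  under eq_bigr do under eq_bigr do rewrite (linZ epsO_lin) epsOM !epsOG mulrA.
  under [X in _ - X]eq_bigr do rewrite (linZ epsO_lin) epsOG.
  rewrite (eq_bigr (fun l => C k l j * (l == i)%:R)); last first.
    by move=> l _; rewrite (sum_delta' (fun m => C k l m * (l == i)%:R)).
  rewrite sum_delta' (eq_bigr (fun l => (k == l)%:R * C l i j)); last by move=> l _; rewrite mulrC.
  by rewrite sum_delta subrr.
- move=> i j; rewrite /rel_inv1 (linB epsO_lin) (lin_sum epsO_lin) epsO_nat.
  under eq_bigr do rewrite epsOM epsOG epsOGb.
  by rewrite sum_delta subrr.
- move=> i j; rewrite /rel_inv2 (linB epsO_lin) (lin_sum epsO_lin) epsO_nat.
  under eq_bigr do rewrite epsOM epsOG epsOGb.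
  by rewrite sum_delta subrr.
Qed.

Lemma lincomb_br x z : lincomb b (fun i => br x (tnth b i)) z = br x z.
Proof.
rewrite [in RHS](b_expand z) br_sumr; apply: eq_bigr => i _; by rewrite brZr.
Qed.

Definition Sz : {vspace V} :=
  (\bigcap_(l < n) lker (linfun (lincomb b (fun i => br (tnth b l) (tnth b i)))))%VS.

Lemma inSz z : z \in Sz <-> forall l, br (tnth b l) z = 0.
Proof.
rewrite memvE; split.
  move/subv_bigcapP => h l; have := h l isT; rewrite -memvE memv_ker lfunE /=.
  by rewrite lincomb_br => /eqP.
move=> h; apply/subv_bigcapP => l _; rewrite -memvE memv_ker lfunE /= lincomb_br.
by rewrite h.
Qed.

Lemma allz z : (forall l, br (tnth b l) z = 0) -> forall x, br x z = 0.
Proof.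
move=> h x; rewrite (b_expand x) br_suml big1 // => i _; by rewrite brZl h scaler0.
Qed.

Lemma leib_kill z : in_leib_ideal br z -> forall x, br x z = 0.
Proof.
move=> hz; apply: allz; apply/inSz; apply: hz.
- move=> x; apply/inSz => l; have := hleib (tnth b l) x x.
  move/(congr1 (fun t => t - br (br (tnth b l) x) x)).
  by rewrite subrr addrC addKr => <-.
- move=> x s /inSz hs; apply/inSz => l; have s0 := allz hs.
  have := hleib (tnth b l) x s; rewrite s0 hs br0l add0r => <-; by [].
- move=> x s /inSz hs; apply/inSz => l; have s0 := allz hs.
  have := hleib (tnth b l) s x; rewrite hs br0l s0 add0r => <-; by [].
Qed.

Local Notation prb := (prw Rm).

Lemma prb_lie (u v : seq 'I_n) (a c : 'I_n) (f : Pol) :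
  prb (u ++ a :: c :: v) f - prb (u ++ c :: a :: v) f
  - \sum_(d < n) C d a c * prb (u ++ d :: v) f = 0.
Proof.
rewrite /prw !Dw_cat /=; set g := Dw Rm v f.
have -> : \sum_(d < n) C d a c * epsO (Dw Rm (u ++ d :: v) f) =
    epsO (Dw Rm u (\sum_(d < n) C d a c *: Dd (Rm d) g)).
  rewrite Dw_sum (lin_sum epsO_lin); apply: eq_bigr => d _.
  by rewrite Dw_cat /= DwZ (linZ epsO_lin).
rewrite -!(linB epsO_lin) -!DwN -!DwD.
rewrite Dd_comm -(Dd_sumM (fun d => C d a c) Rm g).
rewrite (@Dd_ext _ _ g (lie_id a c)).
by rewrite subrr Dw0 (lin0 epsO_lin).
Qed.

Lemma prb_leib (u v : seq 'I_n) (z : V) (f : Pol) : in_leib_ideal br z ->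
  \sum_(d < n) coord b d z * prb (u ++ d :: v) f = 0.
Proof.
move=> hz; rewrite /prw; set g := Dw Rm v f.
have -> : \sum_(d < n) coord b d z * epsO (Dw Rm (u ++ d :: v) f) =
    epsO (Dw Rm u (\sum_(d < n) coord b d z *: Dd (Rm d) g)).
  rewrite Dw_sum (lin_sum epsO_lin); apply: eq_bigr => d _.
  by rewrite Dw_cat /= DwZ (linZ epsO_lin).
rewrite -(Dd_sumM (fun d => coord b d z) Rm g) Dd0 ?Dw0 ?(lin0 epsO_lin) // => k l.
rewrite /Rm /Cst Cexp_r leib_kill //; exact: linear0.
Qed.

Lemma prb_rel w g i j k :
  prb w (g * rel_hom br b i j k) = 0 /\ prb w (g * rel_inv1 K i j) = 0 /\
  prb w (g * rel_inv2 K i j) = 0.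
Proof.
split; [|split]; apply: epsO_inI; apply: Dw_inI; apply: inIM.
- exact: inIhom.
- exact: inI1.
- exact: inI2.
Qed.

Lemma prb_norm i j k : prb [:: k] (G i j) = - C i j k.
Proof.
rewrite /prw /= DdG (linN epsO_lin) (lin_sum epsO_lin); congr (- _).
under eq_bigr do rewrite (linZ epsO_lin) epsOG mulrC.
by rewrite sum_delta.
Qed.

Lemma prb_hopf : is_hopf_pairing br b prb.
Proof.
split; first exact: prw_lin.
split; first exact: prb_lie.
split; first exact: prb_leib.
split; first exact: prb_rel.
split; first by move=> w f g; rewrite prw_shuffle.
split; first exact: prw1.
split; first by move=> u v f; rewrite pair2E prw_cat.
split; first by [].
exact: prb_norm.
Qed.

Section Unique.
Variable pr : seq 'I_n -> Pol -> K.
Hypothesis hpr : is_hopf_pairing br b pr.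

Lemma hopf_der a : isDer (@epsO K n) (pr [:: a]).
Proof.
case: hpr => hlin [_ [_ [_ [hsh [_ [_ [h0 _]]]]]]].
split.
- exact: (linD (hlin [:: a])).
- by move=> c p; rewrite (linZ (hlin [:: a])) epsOC.
- move=> p q; rewrite -hsh big_tuple_cons big_bool /= !big_tuple_nil /= !h0.
  by rewrite addrC.
Qed.

Lemma hopf_G a i j : pr [:: a] (G i j) = - C i j a.
Proof. by case: hpr => _ [_ [_ [_ [_ [_ [_ [_ hn]]]]]]]. Qed.

Lemma hopf_Gb a i j : pr [:: a] (Gb i j) = C i j a.
Proof.
case: hpr => _ [_ [_ [hrel _]]].
have [_ [h1 _]] := hrel [:: a] 1 i j i; move: h1; rewrite mul1r /rel_inv1.
rewrite (derB (hopf_der a)) (derNat epsO1 (hopf_der a)) subr0 (der_sum (hopf_der a)).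
under eq_bigr do rewrite (derM (hopf_der a)) epsOG epsOGb.
rewrite big_split /= sum_delta.
rewrite (eq_bigr (fun k => pr [:: a] (G i k) * (k == j)%:R)) ?sum_delta'; last by [].
by rewrite hopf_G => /eqP; rewrite addrC addr_eq0 opprK => /eqP.
Qed.

End Unique.

Lemma hopf_single pr : is_hopf_pairing br b pr -> forall a f, pr [:: a] f = prb [:: a] f.
Proof.
move=> hpr a; apply: (der_uniq epsO1 (hopf_der hpr a) (hopf_der prb_hopf a)).
apply: gen_X => i j; rewrite -?/(Gv K i j) -?/(Gbv K i j).
  by rewrite (hopf_G hpr) (hopf_G prb_hopf).
by rewrite (hopf_Gb hpr) (hopf_Gb prb_hopf).
Qed.

Lemma hopf_unique pr : is_hopf_pairing br b pr -> forall w f, pr w f = prb w f.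
Proof.
move=> hpr; have hs := hopf_single hpr.
case: hpr => _ [_ [_ [_ [_ [_ [hcat [h0 _]]]]]]].
move=> w f; elim: w f => [|a w IH] f; first by rewrite h0.
rewrite -cat1s hcat pair2E (@tens_ext _ _ (prb [:: a]) (prb w)); last by [].
  by rewrite -prw_cat.
exact: hs.
Qed.

End Bracket.

Section Transport.
Variables (V : vectType K) (br : V -> V -> V) (b b' : n.-tuple V).
Hypotheses (hbil : bilinear_bracket br) (hleib : right_leibniz br)
  (hb : basis_of fullv b) (hb' : basis_of fullv b').

Local Notation A s c := (coord b s (tnth b' c)).
Local Notation Ai i a := (coord b' i (tnth b a)).
Local Notation phi := (phiO b b').

Lemma coord_change (X Y : n.-tuple V) (hX : basis_of fullv X) u l :
  \sum_(k < n) coord X k u * coord Y l (tnth X k) = coord Y l u.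
Proof.
rewrite [in RHS](b_expand hX u) linear_sum; apply: eq_bigr => k _.
by rewrite linearZ.
Qed.

Lemma AAi i j : \sum_(a < n) Ai i a * A a j = (i == j)%:R.
Proof.
rewrite (eq_bigr (fun a => coord b a (tnth b' j) * coord b' i (tnth b a))); last first.
  by move=> a _; rewrite mulrC.
rewrite coord_change // (tnth_nth 0) coord_free ?(basis_free hb') //.
by rewrite eq_sym.
Qed.

Lemma phiOX x : phi ('X_(enum_rank x)) = phiO_var b b' x.
Proof. by rewrite /phiO comp_mpolyXU -tnth_nth tnth_mktuple enum_rankK. Qed.

Lemma phiO_G i j : phi (G i j) = \sum_(a < n) \sum_(c < n) (Ai i a * A c j) *: G a c.
Proof. by rewrite /Gv phiOX. Qed.
Lemma phiO_Gb i j : phi (Gb i j) = \sum_(a < n) \sum_(c < n) (Ai i a * A c j) *: Gb a c.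
Proof. by rewrite /Gbv phiOX. Qed.

Lemma phiO1 : phi 1 = 1.
Proof. exact: comp_mpoly1. Qed.
Lemma phiOD f g : phi (f + g) = phi f + phi g.
Proof. exact: comp_mpolyD. Qed.
Lemma phiOZ c f : phi (c *: f) = c *: phi f.
Proof. exact: comp_mpolyZ. Qed.
Lemma phiOM f g : phi (f * g) = phi f * phi g.
Proof. by rewrite /phiO rmorphM. Qed.
Lemma phiOC c : phi c%:MP = c%:MP.
Proof. exact: comp_mpolyC. Qed.
Lemma phiO_sum I (r : seq I) (P : pred I) F :
  phi (\sum_(i <- r | P i) F i) = \sum_(i <- r | P i) phi (F i).
Proof. by rewrite /phiO raddf_sum. Qed.
Lemma phiON f : phi (- f) = - phi f.
Proof. by rewrite /phiO raddfN. Qed.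

Lemma epsO_phiO f : epsO (phi f) = epsO f.
Proof.
move: f; apply: mpoly_gen_ind.
- by rewrite phiO1.
- apply: gen_X => i j; rewrite -?/(Gv K i j) -?/(Gbv K i j).
  + rewrite phiO_G epsOG (lin_sum epsO_lin) -AAi; apply: eq_bigr => a _.
    rewrite (lin_sum epsO_lin).
    under eq_bigr do rewrite (linZ epsO_lin) epsOG -mulrA.
    rewrite -mulr_sumr; congr (_ * _).
    by rewrite (eq_bigr (fun c => (a == c)%:R * A c j)) ?sum_delta // => c _; exact: mulrC.
  + rewrite phiO_Gb epsOGb (lin_sum epsO_lin) -AAi; apply: eq_bigr => a _.
    rewrite (lin_sum epsO_lin).
    under eq_bigr do rewrite (linZ epsO_lin) epsOGb -mulrA.
    rewrite -mulr_sumr; congr (_ * _).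
    by rewrite (eq_bigr (fun c => (a == c)%:R * A c j)) ?sum_delta // => c _; exact: mulrC.
- by move=> c p h; rewrite phiOZ !(linZ epsO_lin) h.
- by move=> p q hp hq; rewrite phiOD !(linD epsO_lin) hp hq.
- by move=> p q hp hq; rewrite phiOM !epsOM hp hq.
Qed.

Local Notation R' := (Rm br b').
Definition Mc (c : 'I_n) : mat := fun k l => \sum_(s < n) A s c * Rm br b s k l.

Lemma I1 c l j : \sum_(k < n) A l k * R' c k j = \sum_(e < n) Mc c l e * A e j.
Proof.
rewrite /Rm /Cst (eq_bigr (fun k => coord b' k (br (tnth b' j) (tnth b' c)) * coord b l (tnth b' k))); last first.
  by move=> k _; rewrite mulrC.
rewrite coord_change //.
rewrite (eq_bigr (fun e => A e j * coord b l (br (tnth b e) (tnth b' c)))).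
  by rewrite (Cexp_l hbil hb).
move=> e _; rewrite mulrC; congr (_ * _); rewrite /Mc /Rm /Cst -(Cexp_r hbil hb).
by [].
Qed.

Lemma I2 c i l : \sum_(k < n) R' c i k * Ai k l = \sum_(a < n) Ai i a * Mc c a l.
Proof.
rewrite /Rm /Cst (eq_bigr (fun k => Ai k l * coord b' i (br (tnth b' k) (tnth b' c)))); last first.
  by move=> k _; rewrite mulrC.
rewrite (Cexp_l hbil hb').
rewrite (eq_bigr (fun a => coord b a (br (tnth b l) (tnth b' c)) * Ai i a)).
  by rewrite coord_change.
move=> a _; rewrite mulrC; congr (_ * _); rewrite /Mc /Rm /Cst -(Cexp_r hbil hb).
by [].
Qed.

Lemma sum_scale2 (c : 'I_n -> K) (d : 'I_n -> 'I_n -> 'I_n -> K) (X : 'I_n -> 'I_n -> Pol) :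
  \sum_(k < n) c k *: \sum_(a < n) \sum_(e < n) d k a e *: X a e =
  \sum_(a < n) \sum_(e < n) (\sum_(k < n) c k * d k a e) *: X a e.
Proof.
under eq_bigr do rewrite scaler_sumr.
rewrite exchange_big; apply: eq_bigr => a _.
under eq_bigr do rewrite scaler_sumr.
rewrite exchange_big; apply: eq_bigr => e _.
by rewrite scaler_suml; apply: eq_bigr => k _; rewrite scalerA.
Qed.

Lemma phiO_der c : isDer phi (fun f => phi (Dd (R' c) f)).
Proof.
split => /=.
- by move=> p q; rewrite (derD (Dd_der _)) phiOD.
- by move=> a p; rewrite (derZ (Dd_der _)) /= phiOM.
- by move=> p q; rewrite (derM (Dd_der _)) phiOD !phiOM.
Qed.

Lemma Dphi_der M : isDer phi (fun f => Dd M (phi f)).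
Proof.
split => /=.
- by move=> p q; rewrite phiOD (derD (Dd_der _)).
- by move=> a p; rewrite phiOZ (derZ (Dd_der _)) phiOC.
- by move=> p q; rewrite phiOM (derM (Dd_der _)).
Qed.

Lemma phiO_D c f : phi (Dd (R' c) f) = Dd (Mc c) (phi f).
Proof.
move: f; apply: (der_uniq phiO1 (phiO_der c) (Dphi_der (Mc c))).
apply: gen_X => i j; rewrite -?/(Gv K i j) -?/(Gbv K i j) /=.
- rewrite DdG phiON phiO_sum.
  under eq_bigr do rewrite phiOZ phiO_G.
  rewrite sum_scale2 phiO_G Dd_sum.
  under [RHS]eq_bigr do rewrite DdGsum.
  rewrite sumrN; congr (- _); apply: eq_bigr => a _; apply: eq_bigr => e _.
  congr (_ *: _).
  rewrite (eq_bigr (fun k => Ai i a * (A e k * R' c k j))); last first.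
    by move=> k _; rewrite mulrC -mulrA.
  rewrite -mulr_sumr I1 mulr_sumr; apply: eq_bigr => l _.
  by rewrite mulrCA.
- rewrite DdGb phiO_sum.
  under eq_bigr do rewrite phiOZ phiO_Gb.
  rewrite sum_scale2 phiO_Gb [in RHS]exchange_big Dd_sum /=.
  under [RHS]eq_bigr do rewrite DdGbsum.
  rewrite [RHS]exchange_big; apply: eq_bigr => l _; apply: eq_bigr => e _.
  congr (_ *: _).
  rewrite (eq_bigr (fun k => A e j * (R' c i k * Ai k l))); last first.
    by move=> k _; rewrite mulrA mulrC.
  rewrite -mulr_sumr I2 mulr_sumr; apply: eq_bigr => a _.
  by rewrite mulrA [A e j * _]mulrC.
Qed.

Lemma tnth_in_tuple_cons (c : 'I_n) w (t0 : 'I_(size w)) :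
  tnth (in_tuple (c :: w)) (lift ord0 t0) = tnth (in_tuple w) t0.
Proof. by rewrite !(tnth_nth c) lift0. Qed.

Lemma phiO_Dw w f : phi (Dw R' w f) =
  \sum_(s : (size w).-tuple 'I_n)
     (\prod_(t < size w) A (tnth s t) (tnth (in_tuple w) t)) *: Dw (Rm br b) s (phi f).
Proof.
elim: w => [|c w IH].
  by rewrite big_tuple_nil big_ord0 scale1r.
rewrite /= phiO_D IH Dd_sum.
rewrite (big_tuple_cons (fun s : (size w).+1.-tuple 'I_n =>
   (\prod_(t < (size w).+1) A (tnth s t) (tnth (in_tuple (c :: w)) t)) *: Dw (Rm br b) s (phi f))).
under eq_bigr do rewrite DdZ /Mc Dd_sumM scaler_sumr.
rewrite [LHS]exchange_big; apply: eq_bigr => x _; apply: eq_bigr => t _.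
rewrite big_ord_recl tnth0 (tnth_nth c) /=.
under [in RHS]eq_bigr do rewrite tnthS tnth_in_tuple_cons.
by rewrite scalerA mulrC.
Qed.

End Transport.
End Main.

Theorem proposition3p4 (K : fieldType) (V : vectType K) (br : V -> V -> V) (n : nat) :
  bilinear_bracket br -> right_leibniz br -> \dim (fullv : {vspace V}) = n ->
  (* existence and uniqueness, for every ordered basis b *)
  (forall b : n.-tuple V, basis_of fullv b ->
     exists pr : seq 'I_n -> Pol K n -> K,
       is_hopf_pairing br b pr /\
       (forall pr' : seq 'I_n -> Pol K n -> K, is_hopf_pairing br b pr' ->
          forall w f, pr' w f = pr w f)) /\
  (* independence of the basis *)
  (forall b b' : n.-tuple V, basis_of fullv b -> basis_of fullv b' ->
     forall pr pr' : seq 'I_n -> Pol K n -> K,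
       is_hopf_pairing br b pr -> is_hopf_pairing br b' pr' ->
       forall w f, pr' w f = transport b b' pr w f).
Proof.
move=> hbil hleib _; split.
  move=> b hb; exists (prw (Rm br b)); split; first exact: prb_hopf.
  by move=> pr' hpr' w f; apply: hopf_unique.
move=> b b' hb hb' pr pr' hpr hpr' w f.
rewrite (hopf_unique hbil hleib hb' hpr') /transport /prw.
rewrite -(epsO_phiO hb hb') (phiO_Dw hbil hb hb') (lin_sum (@epsO_lin K n)).
apply: eq_bigr => s _.
by rewrite (linZ (@epsO_lin K n)) (hopf_unique hbil hleib hb hpr).
Qed.
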